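(* Let $\mathcal{C}$ be a $\mathbb{Z}_3\mathbb{Z}_9$-additive code of type $(\alpha,\beta;\gamma,\delta;\kappa)$ and $C=\Phi(\mathcal{C})$. Suppose $\mathrm{rank}(C)=\gamma+2\delta+\bar r$ and $\ker(C)=\gamma+2\delta-\bar k$, where $\bar k\in\{1,\ldots,\delta\}$. Then $$1\le\bar r\le\binom{\bar k}{2}+\binom{\bar k+2}{3}.$$ Moreover, if $\ker(C)=\gamma+2\delta$ (i.e. $\bar k=0$), then $\bar r=0$.
   Context: A $\mathbb{Z}_3\mathbb{Z}_9$-additive code $\mathcal{C}$ is a subgroup of $\mathbb{Z}_3^\alpha\times\mathbb{Z}_9^\beta$; as a group $\mathcal{C}\cong\mathbb{Z}_3^\gamma\times\mathbb{Z}_9^\delta$, and if $\kappa$ is the $\mathbb{Z}_3$-dimension of the projection onto the first $\alpha$ coordinates of the subcode of codewords of order dividing $3$, $\mathcal{C}$ has type $(\alpha,\beta;\gamma,\delta;\kappa)$. The Gray map $\phi:\mathbb{Z}_9\to\mathbb{Z}_3^3$ is $\phi(\theta)=\theta''(1,1,1)+\theta'(0,1,2)$ for $\theta=3\theta''+\theta'$, $\theta',\theta''\in\{0,1,2\}$, and $\Phi(\mathbf{x},\mathbf{y})=(\mathbf{x},\phi(y_1),\ldots,\phi(y_\beta))$. $\mathrm{rank}(C)$ is the $\mathbb{Z}_3$-dimension of the linear span of $C$; $K(C)=\{\mathbf{x}\mid C+\mathbf{x}=C\}$ and $\ker(C)=\dim_{\mathbb{Z}_3}K(C)$. *)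

(* Defs.v *)
From HB Require Import structures.
From mathcomp Require Import all_boot all_order all_algebra.
Set Implicit Arguments. Unset Strict Implicit. Unset Printing Implicit Defensive.
Import Order.TTheory GRing.Theory Num.Theory.
Local Open Scope ring_scope.

(* Ambient group Z_3^a x Z_9^b ; Z_3 is represented by the field 'F_3. *)
Definition amb (a b : nat) := ('rV['F_3]_a * 'rV['Z_9]_b)%type.

Definition is_Z3Z9_code (a b : nat) (C : {set amb a b}) : bool :=
  (0 \in C) && [forall x in C, forall y in C, x - y \in C].

Definition has_type (a b : nat) (C : {set amb a b}) (g d k : nat) : Prop :=
  (exists f : 'rV['F_3]_g * 'rV['Z_9]_d -> amb a b,
      {morph f : u v / u + v} /\ injective f /\ f @: [set: _] = C) /\
  let S := [seq x.1 | x <- enum C & x *+ 3 == 0] in \dim (<< S >>)%VS = k.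

(* Gray map phi : Z_9 -> Z_3^3, coordinate k in {0,1,2}:
   phi(t) = t''(1,1,1) + t'(0,1,2) with t = 3 t'' + t'. *)
Definition gray9 (t : 'Z_9) (k : nat) : 'F_3 :=
  (((t : nat) %/ 3)%N + k * ((t : nat) %% 3)%N)%:R.

Lemma div3_ord (b : nat) (j : 'I_(3 * b)) : (j %/ 3 < b)%N.
Proof. by rewrite ltn_divLR // [X in (_ < X)%N]mulnC ltn_ord. Qed.

Definition div3 (b : nat) (j : 'I_(3 * b)) : 'I_b := Ordinal (div3_ord j).

(* Phi(x, y) = (x, phi(y_1), ..., phi(y_b)) *)
Definition Phi (a b : nat) (xy : amb a b) : 'rV['F_3]_(a + 3 * b) :=
  \row_i match split i with
         | inl i1 => xy.1 0 i1
         | inr j => gray9 (xy.2 0 (div3 j)) (j %% 3)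
         end.

Definition rank_code (n : nat) (C : {set 'rV['F_3]_n}) : nat :=
  \dim (<< enum C >>)%VS.

Definition kernel_code (n : nat) (C : {set 'rV['F_3]_n}) : {set 'rV['F_3]_n} :=
  [set x | [set y + x | y in C] == C].

Definition ker_code (n : nat) (C : {set 'rV['F_3]_n}) : nat :=
  \dim (<< enum (kernel_code C) >>)%VS.

(* Main.v *)
Require Import Defs.
From mathcomp Require Import all_boot all_order all_algebra all_field.
From mathcomp Require Import zify ring.
Set Implicit Arguments. Unset Strict Implicit. Unset Printing Implicit Defensive.
Import Order.TTheory GRing.Theory Num.Theory.
Local Open Scope ring_scope.

Lemma F3v m : ((m%:R : 'F_3) : nat) = (m %% 3)%N.
Proof. by rewrite Zp_nat. Qed.

Lemma F3nat n : (n%:R : 'F_3) = (n %% 3)%N%:R.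
Proof. by apply/val_inj => /=; rewrite !Zp_nat /= modn_mod. Qed.

Lemma F3_3 : (3%:R : 'F_3) = 0.
Proof. by rewrite F3nat. Qed.

Lemma F3_cases (x : 'F_3) : x = 0 \/ x = 1 \/ x = 2.
Proof.
case: x => [[|[|[|m]]] Hx]; [left|right;left|right;right|by []]; exact/val_inj.
Qed.

Lemma F3_val (x : 'F_3) : ((x : nat)%:R : 'F_3) = x.
Proof. exact: natr_Zp. Qed.

Ltac F3c := apply/val_inj; rewrite /= (Fp_Zcast (isT : prime 3)).

Lemma F3_cube (x : 'F_3) : x * x * x = x.
Proof. by have [->|[->|->]] := F3_cases x; F3c. Qed.

Lemma F3_inj m n : (m < 3)%N -> (n < 3)%N -> (m%:R : 'F_3) = n%:R -> m = n.
Proof.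
move=> Hm Hn /(congr1 val) /=; rewrite !Zp_nat /= !modn_small //.
Qed.

Lemma F3_eqmod m n : (m%:R : 'F_3) = n%:R -> (m %% 3 = n %% 3)%N.
Proof. by move/(congr1 val) => /=; rewrite !Zp_nat. Qed.

Lemma F3_quad (f : 'F_3 -> 'F_3) : f 0 = 0 -> forall x,
  f x = (f 2 - f 1) * x + (2 * f 1 - f 2) * (x * x).
Proof.
move=> f0 x; have [->|[->|->]] := F3_cases x; rewrite ?f0;
move: (f 1) (f 2) => u v;
by have [->|[->|->]] := F3_cases u; have [->|[->|->]] := F3_cases v; F3c.
Qed.

Definition Dg (n : nat) : 'F_3 := (n %/ 3)%N%:R.
Definition carry (s t : nat) : 'F_3 := (3 <= s + t)%N%:R.

Lemma gray9E (t : 'Z_9) k : gray9 t k = Dg t + k%:R * (t : nat)%:R.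
Proof. by rewrite /gray9 natrD natrM /Dg -F3nat. Qed.

Lemma Dg_mod9 n : Dg (n %% 9) = Dg n.
Proof.
rewrite /Dg; have -> : (n %/ 3 = (n %% 9) %/ 3 + (n %/ 9) * 3)%N by lia.
by rewrite natrD natrM F3_3 mulr0 addr0.
Qed.

Lemma F3_mod9 n : ((n %% 9)%N%:R : 'F_3) = n%:R.
Proof.
have h9 : (9%:R : 'F_3) = 0 by F3c.
by rewrite [in RHS](divn_eq n 9) natrD natrM h9 mulr0 add0r.
Qed.

Lemma Dg_add n m : Dg (n + m) = Dg n + Dg m + carry (n %% 3) (m %% 3).
Proof.
rewrite /Dg /carry -!natrD.
have -> : ((n + m) %/ 3 = n %/ 3 + m %/ 3 + (3 <= n %% 3 + m %% 3))%N.
  by case: leqP => H /=; lia.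
by [].
Qed.

Lemma Dg_add3 n m : Dg (n + 3 * m) = Dg n + m%:R.
Proof. by rewrite /Dg -natrD; have -> : ((n + 3 * m) %/ 3 = n %/ 3 + m)%N by lia. Qed.

Lemma carryE s t : (s < 3)%N -> (t < 3)%N ->
  carry s t = 2 * s%:R * t%:R * (1 + s%:R + t%:R).
Proof.
by case: s => [|[|[|s]]] //; case: t => [|[|[|t]]] // _ _; F3c.
Qed.

Lemma Z9_add_val (x y : 'Z_9) : (((x + y)%R : 'Z_9) : nat) = (((x : nat) + y) %% 9)%N.
Proof. by []. Qed.

Lemma Z9_nat_val n : ((n%:R : 'Z_9) : nat) = (n %% 9)%N.
Proof. by rewrite val_Zp_nat. Qed.

Section PhiFacts.
Variables a b : nat.
Implicit Types x y z t : amb a b.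

Definition tau x : 'rV['F_3]_b := \row_l (((x.2 0 l) : nat)%:R).

Lemma tauD x y : tau (x + y) = tau x + tau y.
Proof.
apply/rowP => l; rewrite !mxE /= -[(Zp_trunc 9).+2]/9%N F3_mod9 natrD //.
Qed.

Lemma tau0 : tau 0 = 0.
Proof. by apply/rowP => l; rewrite !mxE /= ?mxE. Qed.

Lemma tauB x y : tau (x - y) = tau x - tau y.
Proof. by apply/eqP; rewrite eq_sym subr_eq -tauD subrK. Qed.

Lemma tauN x : tau (- x) = - tau x.
Proof. by rewrite -sub0r tauB tau0 sub0r. Qed.

Lemma tauMn x m : tau (x *+ m) = tau x *+ m.
Proof. by elim: m => [|m IH]; rewrite ?mulr0n ?tau0 // !mulrS tauD IH. Qed.

Lemma Phi0 : Phi (0 : amb a b) = 0.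
Proof.
apply/rowP => i; rewrite !mxE; case: (split i) => [i1|j] /=; rewrite mxE //.
by rewrite ?mxE gray9E /Dg /= div0n mulr0 addr0.
Qed.

Lemma tau0_mod3 t l : tau t = 0 -> ((t.2 0%R l : nat) %% 3 = 0)%N.
Proof.
move/rowP/(_ l); rewrite !mxE => /(congr1 val) /=.
by rewrite Zp_nat /=.
Qed.

Lemma Phi_add3 x t : tau t = 0 -> Phi (x + t) = Phi x + Phi t.
Proof.
move=> Ht; apply/rowP => i; rewrite !mxE; case: (split i) => [i1|j] /=.
  by rewrite mxE.
have H3 := tau0_mod3 (div3 j) Ht.
rewrite mxE !gray9E Z9_add_val Dg_mod9 F3_mod9.
move: (x.2 0 (div3 j)) (t.2 0 (div3 j)) H3 => X T H3.
have -> : (T : nat) = (3 * (T %/ 3))%N by lia.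
rewrite Dg_add3 /Dg natrD !natrM F3_3 mul0r.
have -> : ((3 * (T %/ 3)) %/ 3 = T %/ 3)%N by lia.
ring.
Qed.

Definition psum x y : amb a b :=
  (x.1 + y.1, \row_l ((3 * ((x.2 0%R l : nat) %/ 3 + (y.2 0%R l : nat) %/ 3)
                       + ((x.2 0%R l : nat) + y.2 0%R l) %% 3)%N%:R)).

Lemma Phi_psum x y : Phi (psum x y) = Phi x + Phi y.
Proof.
apply/rowP => i; rewrite !mxE; case: (split i) => [i1|j] /=.
  by rewrite mxE.
rewrite !mxE !gray9E Z9_nat_val Dg_mod9 F3_mod9.
move: (x.2 0 (div3 j)) (y.2 0 (div3 j)) => X Y.
rewrite addnC Dg_add3 /Dg divn_small ?ltn_mod // add0r.
rewrite (natrD _ ((X + Y) %% 3)%N) natrM F3_3 mul0r addr0 -(F3nat (X + Y)%N) !natrD.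
ring.
Qed.

Lemma tau_psum x y : tau (psum x y) = tau x + tau y.
Proof.
apply/rowP => l; rewrite !mxE Z9_nat_val F3_mod9.
by rewrite natrD natrM F3_3 mul0r add0r -F3nat natrD.
Qed.

Lemma ord_lt3 (l : 'I_b) (r : nat) : (r < 3)%N -> (3 * l + r < 3 * b)%N.
Proof. move=> Hr; have := ltn_ord l; lia. Qed.

Lemma Phi_Z9 x (l : 'I_b) (r : nat) (Hr : (r < 3)%N) :
  Phi x 0 (rshift a (Ordinal (ord_lt3 l Hr))) = gray9 (x.2 0 l) r.
Proof.
rewrite mxE /= (unsplitK (inr _)).
have -> : div3 (Ordinal (ord_lt3 l Hr)) = l by apply/val_inj => /=; lia.
by rewrite /=; congr gray9; lia.
Qed.

Lemma Phi_Z3 x (i : 'I_a) : Phi x 0 (lshift (3 * b) i) = x.1 0 i.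
Proof. by rewrite mxE (unsplitK (inl _)). Qed.

Lemma Phi_inj : injective (@Phi a b).
Proof.
move=> [x1 x2] [y1 y2] E; congr pair.
  by apply/rowP => i; have := Phi_Z3 (x1, x2) i; rewrite E Phi_Z3.
apply/rowP => l.
have E0 := Phi_Z9 (x1, x2) l (isT : (0 < 3)%N).
have E1 := Phi_Z9 (x1, x2) l (isT : (1 < 3)%N).
rewrite E Phi_Z9 /= in E0; rewrite E Phi_Z9 /= in E1.
rewrite !gray9E in E0 E1.
rewrite !mulr0n !mul0r !addr0 in E0; rewrite !mulr1n !mul1r E0 in E1; have {}E1 := GRing.addrI _ E1.
move: E0; rewrite /Dg => /F3_eqmod => E0.
move/F3_eqmod: E1 => E1.
apply/val_inj; move: (x2 0 l) (y2 0 l) E0 E1 => [X HX] [Y HY] /= E0 E1.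
have H9 : (Zp_trunc 9).+2 = 9%N by []. rewrite H9 in HX HY; lia.
Qed.

End PhiFacts.

Section Subsp.
Variable n : nat.
Implicit Types S : {set 'rV['F_3]_n}.

Definition addcl S := (0 \in S) /\ (forall x y, x \in S -> y \in S -> x + y \in S).

Lemma addcl_Mn S x m : addcl S -> x \in S -> x *+ m \in S.
Proof.
move=> [S0 SD] xS; elim: m => [|m IH]; first by rewrite mulr0n.
by rewrite mulrS SD.
Qed.

Lemma addcl_Z S (c : 'F_3) x : addcl S -> x \in S -> c *: x \in S.
Proof. by move=> Sc xS; rewrite -[c]F3_val scaler_nat addcl_Mn. Qed.

Lemma addcl_N S x : addcl S -> x \in S -> - x \in S.
Proof. by move=> Sc xS; rewrite -scaleN1r addcl_Z. Qed.

Lemma addcl_sum S (I : finType) (F : I -> 'rV['F_3]_n) (P : pred I) :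
  addcl S -> (forall i, P i -> F i \in S) -> \sum_(i | P i) F i \in S.
Proof.
move=> [S0 SD] HF; apply: (big_ind (fun x => x \in S)) => //.
Qed.

Lemma addcl_span S v : addcl S -> v \in <<enum S>>%VS -> v \in S.
Proof.
move=> Sc; rewrite -[enum S]/(tval (in_tuple (enum S))) => /coord_span ->.
apply: addcl_sum => // i _; apply: addcl_Z => //.
by rewrite -mem_enum mem_nth // size_tuple.
Qed.

Lemma addcl_card S : addcl S -> #|S| = (3 ^ \dim <<enum S>>)%N.
Proof.
move=> Sc; have H := card_vspace <<enum S>>%VS.
rewrite (card_Fp (isT : prime 3)) in H; rewrite -H.
apply: eq_card => v; apply/idP/idP => [vS|]; last exact: addcl_span.
by apply: memv_span; rewrite mem_enum.
Qed.

Lemma kerP S x : reflect (forall y, y \in S -> y + x \in S) (x \in kernel_code S).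
Proof.
rewrite inE; apply: (iffP eqP) => [E y yS|H].
  by rewrite -E; apply/imsetP; exists y.
apply/eqP; rewrite eqEcard card_imset; last exact: addIr.
rewrite leqnn andbT; apply/subsetP => z /imsetP [y yS ->]; exact: H.
Qed.

Lemma ker_sub S : 0 \in S -> {subset kernel_code S <= S}.
Proof. by move=> S0 x /kerP /(_ 0 S0); rewrite add0r. Qed.

Lemma ker_addcl S : addcl (kernel_code S).
Proof.
split; first by apply/kerP => y; rewrite addr0.
move=> x z /kerP Hx /kerP Hz; apply/kerP => y yS.
by rewrite addrA; apply: Hz; apply: Hx.
Qed.

End Subsp.

Section Code.
Variables (a b : nat) (C : {set amb a b}) (HC : is_Z3Z9_code C).

Lemma C0 : 0 \in C. Proof. by case/andP: HC. Qed.
Lemma CB x y : x \in C -> y \in C -> x - y \in C.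
Proof. by case/andP: HC => _ /forall_inP H xC yC; move/forall_inP: (H x xC) => /(_ y yC). Qed.
Lemma CN x : x \in C -> - x \in C.
Proof. by move=> xC; rewrite -sub0r CB // C0. Qed.
Lemma CD x y : x \in C -> y \in C -> x + y \in C.
Proof. by move=> xC yC; rewrite -[y]opprK CB // CN. Qed.
Lemma CMn x m : x \in C -> x *+ m \in C.
Proof. by move=> xC; elim: m => [|m IH]; rewrite ?mulr0n ?C0 // mulrS CD. Qed.
Lemma Csum (I : finType) (F : I -> amb a b) (P : pred I) :
  (forall i, P i -> F i \in C) -> \sum_(i | P i) F i \in C.
Proof. by move=> HF; apply: (big_ind (fun x => x \in C)) => //; [exact: C0 | exact: CD]. Qed.

Let CC := [set Phi x | x in C].
Let K := kernel_code CC.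

Lemma memCC x : (Phi x \in CC) = (x \in C).
Proof. by rewrite mem_imset //; exact: Phi_inj. Qed.

Lemma CC0 : 0 \in CC.
Proof. by rewrite -(Phi0 a b) memCC C0. Qed.

Lemma cardCC : #|CC| = #|C|.
Proof. by rewrite card_imset //; exact: Phi_inj. Qed.

Lemma KsubCC : {subset K <= CC}.
Proof. exact: ker_sub CC0. Qed.

Lemma Z3K t : t \in C -> tau t = 0 -> Phi t \in K.
Proof.
move=> tC t0; apply/kerP => y /imsetP [x xC ->].
by rewrite -Phi_add3 // memCC CD.
Qed.

Definition KC := [set x in C | Phi x \in K].

Lemma KC_shift x y : y \in KC -> x \in C -> Phi (x + y) - Phi x \in K.
Proof.
rewrite inE => /andP [yC yK] xC.
have zC : psum x y \in C.
  by rewrite -memCC Phi_psum; apply: (kerP _ _ yK); rewrite memCC.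
set z := psum x y in zC.
set t := z - x - y.
have tC : t \in C by rewrite /t !CB.
have t0 : tau t = 0 by rewrite /t !tauB tau_psum [tau x + _]addrC addrK subrr.
have tK := Z3K tC t0.
have E : Phi z = Phi (x + y) + Phi t.
  by rewrite -Phi_add3 // /t addrC addrA addrAC !subrK.
have -> : Phi (x + y) - Phi x = Phi y - Phi t.
  have E2 : Phi (x + y) = Phi x + Phi y - Phi t by rewrite -Phi_psum -/z E addrK.
  by rewrite E2 addrAC [Phi x + _]addrC addrK.
have Ka := ker_addcl CC.
by apply: (proj2 Ka) => //; apply: addcl_N.
Qed.

Lemma KC0 : 0 \in KC.
Proof. by rewrite inE C0 Phi0 (proj1 (ker_addcl CC)). Qed.

Lemma KCD y1 y2 : y1 \in KC -> y2 \in KC -> y1 + y2 \in KC.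
Proof.
move=> H1 H2; have := H1; rewrite inE => /andP [y1C y1K].
have := H2; rewrite inE => /andP [y2C y2K].
rewrite inE CD //=.
rewrite -(subrK (Phi y1) (Phi (y1 + y2))).
by apply: (proj2 (ker_addcl CC)) => //; apply: KC_shift.
Qed.

Lemma KCsub : {subset KC <= C}.
Proof. by move=> x; rewrite inE => /andP []. Qed.

Lemma KCMn x m : x \in KC -> x *+ m \in KC.
Proof. by move=> xC; elim: m => [|m IH]; rewrite ?mulr0n ?KC0 // mulrS KCD. Qed.
Lemma KCsum (I : finType) (F : I -> amb a b) (P : pred I) :
  (forall i, P i -> F i \in KC) -> \sum_(i | P i) F i \in KC.
Proof. by move=> HF; apply: (big_ind (fun x => x \in KC)) => //; [exact: KC0 | exact: KCD]. Qed.

Lemma Z3KC t : t \in C -> tau t = 0 -> t \in KC.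
Proof. by move=> tC t0; rewrite inE tC Z3K. Qed.

Lemma cardKC : #|KC| = #|K|.
Proof.
rewrite -(card_imset _ (@Phi_inj a b)); apply: eq_card => v.
apply/imsetP/idP => [[x] | vK]; first by rewrite inE => /andP [_ ?] ->.
have := KsubCC vK => /imsetP [x xC Ex]; exists x => //.
by rewrite inE xC -Ex.
Qed.

End Code.

Section Decomp.
Variables (a b : nat).

Lemma tau_sum (I : finType) (F : I -> amb a b) :
  tau (\sum_i F i) = \sum_i tau (F i).
Proof. exact: (big_morph _ (@tauD a b) (@tau0 a b)). Qed.

Lemma tau_span (H : {set amb a b}) w :
  0 \in H -> (forall x y, x \in H -> y \in H -> x + y \in H) ->
  w \in <<[seq tau x | x <- enum H]>>%VS -> exists2 x, x \in H & tau x = w.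
Proof.
move=> H0 HD; set X := [seq tau x | x <- enum H].
rewrite -[X]/(tval (in_tuple X)) => /coord_span ->.
set c := coord _.
have HMn x m : x \in H -> x *+ m \in H.
  by move=> xH; elim: m => [|m IH]; rewrite ?mulr0n // mulrS HD.
exists (\sum_(i < size X) (enum H)`_i *+ (c i w : nat)).
  apply: (big_ind (fun x => x \in H)) => // i _; apply: HMn.
  have : (enum H)`_i \in enum H.
    have Hs : size X = size (enum H) by rewrite size_map.
    by rewrite mem_nth // -Hs ltn_ord.
  by rewrite mem_enum.
rewrite (big_morph _ (@tauD a b) (@tau0 a b)); apply: eq_bigr => i _.
rewrite tauMn -scaler_nat F3_val /=; congr (_ *: _).
have Hs : size X = size (enum H) by rewrite size_map.
by rewrite /X (nth_map 0) // -Hs ltn_ord.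
Qed.

Variables (C : {set amb a b}) (HC : is_Z3Z9_code C).

Let KC := KC C.

Lemma decomp : exists k' (v : 'I_k' -> amb a b),
  [/\ (forall i, v i \in C),
      (forall x, x \in C -> exists mu : {ffun 'I_k' -> 'F_3},
          x - \sum_i v i *+ (mu i : nat) \in KC) &
      (3 ^ k' * #|KC| <= #|C|)%N].
Proof.
set W := <<[seq tau x | x <- enum C]>>%VS.
set U := <<[seq tau x | x <- enum KC]>>%VS.
set Wc := (W :\: U)%VS.
set bs := vbasis Wc.
have trC := @tau_span C _ (C0 HC) (CD HC).
have trK := @tau_span KC _ (KC0 HC) (@KCD _ _ _ HC).
have UW : (U <= W)%VS.
  apply: sub_span => w /mapP [x]; rewrite mem_enum => xK ->.
  by apply/mapP; exists x => //; rewrite mem_enum KCsub.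
have bsWc (i : 'I_(\dim Wc)) : bs`_i \in Wc.
  by apply: vbasis_mem; apply: mem_nth; rewrite size_tuple.
have bsW (i : 'I_(\dim Wc)) : bs`_i \in W.
  by apply: (subvP (diffvSl W U)).
have : forall i : 'I_(\dim Wc), exists x, (x \in C) && (tau x == bs`_i).
  move=> i; have [x xC tx] := trC _ (bsW i); exists x; by rewrite xC tx eqxx.
case/fin_all_exists => v Hv.
have vC i : v i \in C by case/andP: (Hv i).
have tv i : tau (v i) = bs`_i by case/andP: (Hv i) => _ /eqP.
have tauS (mu : {ffun 'I_(\dim Wc) -> 'F_3}) :
    tau (\sum_i v i *+ (mu i : nat)) = \sum_i mu i *: bs`_i.
  rewrite tau_sum; apply: eq_bigr => i _.
  by rewrite tauMn tv -scaler_nat F3_val.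
have SC (mu : {ffun 'I_(\dim Wc) -> 'F_3}) : \sum_i v i *+ (mu i : nat) \in C.
  by apply: Csum => // i _; apply: CMn.
have inWc (c : 'I_(\dim Wc) -> 'F_3) : \sum_i c i *: bs`_i \in Wc.
  by apply: memv_suml => i _; apply: memvZ.
have tKU y : y \in KC -> tau y \in U.
  by move=> yK; apply: memv_span; apply/mapP; exists y; rewrite ?mem_enum.
exists (\dim Wc), v; split => //.
- move=> x xC.
  have : tau x \in (Wc + U)%VS.
    have : tau x \in W by apply: memv_span; apply/mapP; exists x; rewrite ?mem_enum.
    rewrite -{1}(addv_diff_cap W U) => /memv_addP [w1 w1W [w2 w2W ->]].
    apply/memv_addP; exists w1 => //; exists w2 => //.
    by move: w2W; rewrite memv_cap => /andP [].
  case/memv_addP => w1 w1Wc [w2 w2U Ex].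
  have [y0 y0K ty0] := trK _ w2U.
  exists [ffun i => coord bs i w1].
  have -> : x - \sum_i v i *+ ([ffun i => coord bs i w1] i : nat) =
            (x - \sum_i v i *+ ([ffun i => coord bs i w1] i : nat) - y0) + y0.
    by rewrite subrK.
  apply: KCD => //; apply: Z3KC => //.
    by apply: CB => //; [apply: CB | apply: KCsub].
  rewrite !tauB tauS Ex ty0.
  have -> : \sum_i [ffun i => coord bs i w1] i *: bs`_i = w1.
    rewrite [in RHS](coord_vbasis w1Wc); apply: eq_bigr => i _; by rewrite ffunE.
  by rewrite [w1 + w2]addrC addrK subrr.
- set f := fun p : {ffun 'I_(\dim Wc) -> 'F_3} * amb a b =>
            \sum_i v i *+ (p.1 i : nat) + p.2.
  have finj : {in setX [set: {ffun 'I_(\dim Wc) -> 'F_3}] KC &, injective f}.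
    move=> [mu y] [nu y'] /setXP [_ yK] /setXP [_ y'K] /= E.
    have E2 : \sum_i (mu i - nu i) *: bs`_i = tau y' - tau y.
      have := congr1 (@tau a b) E; rewrite /f /= !tauD !tauS => E'.
      rewrite (eq_bigr (fun i => mu i *: bs`_i - nu i *: bs`_i)); last first.
        by move=> i _; rewrite scalerBl.
      rewrite sumrB.
      have Em : \sum_i mu i *: bs`_i = \sum_i nu i *: bs`_i + tau y' - tau y.
        by rewrite -E' addrK.
      by rewrite Em addrAC [_ + tau y']addrC addrK.
    have Z : \sum_i (mu i - nu i) *: bs`_i = 0.
      apply/eqP; rewrite -memv0 -(capv_diff W U) memv_cap inWc /= E2.
      by apply: rpredB; apply: tKU.
    have muv : mu = nu.
      apply/ffunP => i; apply/eqP; rewrite -subr_eq0; apply/eqP.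
      move: Z; move/freeP: (basis_free (vbasisP Wc)) => Hf Z.
      exact: (Hf (fun i => mu i - nu i) Z i).
    by move: E; rewrite /f /= muv => /GRing.addrI ->.
  have H3 : #|'F_3| = 3%N := card_Fp (isT : prime 3).
  have := card_in_imset finj; rewrite cardsX cardsT card_ffun H3 card_ord => <-.
  apply: subset_leq_card; apply/subsetP => z /imsetP [[mu y] /setXP [_ yK] ->].
  by rewrite /f /=; apply: CD => //; apply: KCsub.
Qed.

End Decomp.

Section Cub.
Variable k : nat.
Notation mu_t := {ffun 'I_k -> 'F_3}.

Definition predA : pred {set 'I_k} := fun A => (1 <= #|A| <= 3)%N.
Definition mA (A : {set 'I_k}) (mu : mu_t) : 'F_3 := \prod_(i in A) mu i.
Definition mB (p : 'I_k * 'I_k) (mu : mu_t) : 'F_3 :=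
  mu p.1 * mu p.1 * (if p.1 == p.2 then 1 else mu p.2).

Definition Cub (f : mu_t -> 'F_3) : Prop :=
  exists c : ({set 'I_k} -> 'F_3) * ('I_k * 'I_k -> 'F_3),
    forall mu, f mu = \sum_(A | predA A) c.1 A * mA A mu + \sum_p c.2 p * mB p mu.

Lemma Poly_ext f g : Cub f -> (forall mu, g mu = f mu) -> Cub g.
Proof. by move=> [c Hc] E; exists c => mu; rewrite E Hc. Qed.

Lemma Poly0 : Cub (fun _ => 0).
Proof.
exists (fun _ => 0, fun _ => 0) => mu /=.
by rewrite !big1 ?addr0 // => *; rewrite mul0r.
Qed.

Lemma PolyD f g : Cub f -> Cub g -> Cub (fun mu => f mu + g mu).
Proof.
move=> [c Hc] [d Hd]; exists (fun A => c.1 A + d.1 A, fun p => c.2 p + d.2 p) => mu /=.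
rewrite Hc Hd.
rewrite (eq_bigr (F1 := fun A => (c.1 A + d.1 A) * mA A mu) (fun A => c.1 A * mA A mu + d.1 A * mA A mu)); last by move=> *; rewrite mulrDl.
rewrite (eq_bigr (F1 := fun p => (c.2 p + d.2 p) * mB p mu) (fun p => c.2 p * mB p mu + d.2 p * mB p mu)); last by move=> *; rewrite mulrDl.
rewrite !big_split /=. ring.
Qed.

Lemma PolyZ (e : 'F_3) f : Cub f -> Cub (fun mu => e * f mu).
Proof.
move=> [c Hc]; exists (fun A => e * c.1 A, fun p => e * c.2 p) => mu /=.
by rewrite Hc mulrDr !mulr_sumr; congr (_ + _); apply: eq_bigr => *; rewrite mulrA.
Qed.

Lemma Poly_sum (I : finType) (F : I -> mu_t -> 'F_3) :
  (forall i, Cub (F i)) -> Cub (fun mu => \sum_i F i mu).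
Proof.
move=> H; have [c Hc] := fin_all_exists H.
exists (fun A => \sum_i (c i).1 A, fun p => \sum_i (c i).2 p) => mu /=.
rewrite (eq_bigr _ (fun i _ => Hc i mu)) big_split /=.
congr (_ + _); rewrite exchange_big; apply: eq_bigr => * /=; by rewrite mulr_suml.
Qed.

Lemma PolyA A : predA A -> Cub (mA A).
Proof.
move=> HA; exists (fun B => (B == A)%:R, fun _ => 0) => mu /=.
rewrite [X in _ = _ + X]big1; last by move=> *; rewrite mul0r.
rewrite addr0 (bigD1 A) //= eqxx mul1r big1 ?addr0 //.
by move=> B /andP [_ /negbTE ->]; rewrite mul0r.
Qed.

Lemma PolyB p : Cub (mB p).
Proof.
exists (fun _ => 0, fun q => (q == p)%:R) => mu /=.
rewrite [X in _ = X + _]big1; last by move=> *; rewrite mul0r.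
rewrite add0r (bigD1 p) //= eqxx mul1r big1 ?addr0 //.
by move=> q /negbTE ->; rewrite mul0r.
Qed.

Lemma Poly1 i : Cub (fun mu => mu i).
Proof.
apply: Poly_ext (PolyA (A := [set i]) _) _; first by rewrite /predA cards1.
by move=> mu; rewrite /mA big_set1.
Qed.

Lemma Poly2 i j : Cub (fun mu => mu i * mu j).
Proof.
case: (eqVneq i j) => [<-|ij].
  apply: Poly_ext (PolyB (i, i)) _ => mu; by rewrite /mB /= eqxx mulr1.
apply: Poly_ext (PolyA (A := [set i; j]) _) _; first by rewrite /predA cards2 ij.
move=> mu; rewrite /mA big_setU1 ?big_set1 // inE; exact: ij.
Qed.

Lemma Poly3 i j l : Cub (fun mu => mu i * mu j * mu l).
Proof.
case: (eqVneq i j) => [<-|ij].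
  case: (eqVneq i l) => [<-|il].
    by apply: Poly_ext (Poly1 i) _ => mu; rewrite F3_cube.
  apply: Poly_ext (PolyB (i, l)) _ => mu; by rewrite /mB /= (negbTE il).
case: (eqVneq i l) => [<-|il].
  apply: Poly_ext (PolyB (i, j)) _ => mu; rewrite /mB /= (negbTE ij).
  by rewrite mulrAC.
case: (eqVneq j l) => [<-|jl].
  apply: Poly_ext (PolyB (j, i)) _ => mu; rewrite /mB /= eq_sym (negbTE ij).
  ring.
have Hi : i \notin [set j; l] by rewrite !inE negb_or ij il.
have Hj : j \notin [set l] by rewrite !inE jl.
apply: Poly_ext (PolyA (A := i |: [set j; l]) _) _.
  by rewrite /predA cardsU1 Hi cards2 jl.
move=> mu; rewrite /mA big_setU1 // big_setU1 // big_set1.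
rewrite /=; ring.
Qed.

Definition lin (c : 'I_k -> 'F_3) (mu : mu_t) := \sum_i c i * mu i.

Lemma PolyL1 c : Cub (lin c).
Proof. by apply: Poly_sum => i; apply: PolyZ; apply: Poly1. Qed.

Lemma PolyL2 c d : Cub (fun mu => lin c mu * lin d mu).
Proof.
apply: Poly_ext (Poly_sum (fun i => Poly_sum (fun j => PolyZ (c i * d j) (Poly2 i j)))) _.
move=> mu /=; rewrite /lin mulr_suml; apply: eq_bigr => i _.
rewrite mulr_sumr; apply: eq_bigr => j _; ring.
Qed.

Lemma PolyL3 c d e : Cub (fun mu => lin c mu * lin d mu * lin e mu).
Proof.
apply: Poly_ext (Poly_sum (fun i => Poly_sum (fun j => Poly_sum (fun l =>
   PolyZ (c i * d j * e l) (Poly3 i j l))))) _.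
move=> mu /=; rewrite /lin !mulr_suml; apply: eq_bigr => i _.
rewrite -mulrA mulr_suml mulr_sumr; apply: eq_bigr => j _.
rewrite mulrA mulr_sumr; apply: eq_bigr => l _; ring.
Qed.

End Cub.

Section PolyDg.
Variable k : nat.
Notation mu_t := {ffun 'I_k -> 'F_3}.

Lemma lin_ind (P : pred 'I_k) (c : 'I_k -> 'F_3) mu :
  lin (fun i => if P i then c i else 0) mu = \sum_(i | P i) c i * mu i.
Proof.
rewrite /lin [RHS]big_mkcond; apply: eq_bigr => i _.
by case: (P i); rewrite ?mul0r.
Qed.

Lemma Dg0 : Dg 0 = 0. Proof. by rewrite /Dg div0n. Qed.

Lemma PolyDg_card (A : 'I_k -> nat) n : forall S : {set 'I_k}, #|S| = n ->
  Cub (fun mu : mu_t => Dg (\sum_(i in S) (mu i : nat) * A i)%N).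
Proof.
elim: n => [|n IH] S HS.
  move/eqP: HS; rewrite cards_eq0 => /eqP ->.
  apply: (Poly_ext (@Poly0 k)) => mu; by rewrite big_set0 Dg0.
have [m mS] : exists m, m \in S.
  by apply/set0Pn; rewrite -card_gt0 HS.
have HS' : #|S :\ m| = n by move: HS; rewrite (cardsD1 m) mS add1n => -[].
have IH' := IH _ HS'.
set R := fun mu : mu_t => (\sum_(i in S :\ m) (mu i : nat) * A i)%N.
have ES (mu : mu_t) : (\sum_(i in S) (mu i : nat) * A i = (mu m : nat) * A m + R mu)%N.
  rewrite (bigD1 m) //=; congr (_ + _)%N; apply: eq_bigl => i.
  by rewrite in_setD1 andbC.
set cs := fun i : 'I_k => if i == m then (A m)%:R else 0 : 'F_3.
set ct := fun i : 'I_k => if i \in S :\ m then (A i)%:R else 0 : 'F_3.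
have Es (mu : mu_t) : (((mu m : nat) * A m)%N%:R : 'F_3) = lin cs mu.
  rewrite /cs lin_ind big_pred1_eq natrM F3_val mulrC //.
have Et (mu : mu_t) : ((R mu)%:R : 'F_3) = lin ct mu.
  rewrite /ct lin_ind /R natr_sum; apply: eq_bigr => i _.
  by rewrite natrM F3_val mulrC.
set g := fun x : 'F_3 => Dg ((x : nat) * A m)%N.
have g0 : g 0 = 0 by rewrite /g /= mul0n Dg0.
apply: (@Poly_ext _ (fun mu => ((g 2 - g 1) * mu m + (2 * g 1 - g 2) * (mu m * mu m)) +
   Dg (R mu) + (2 * (lin cs mu * lin ct mu) + 2 * (lin cs mu * lin cs mu * lin ct mu)
    + 2 * (lin cs mu * lin ct mu * lin ct mu)))).
  apply: PolyD; first apply: PolyD.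
  - apply: PolyD; apply: PolyZ; [exact: Poly1 | exact: Poly2].
  - exact: IH'.
  - apply: PolyD; first apply: PolyD; apply: PolyZ;
      [exact: PolyL2 | exact: PolyL3 | exact: PolyL3].
move=> mu; rewrite ES Dg_add -F3_quad //.
have H1 : (((mu m : nat) * A m) %% 3 < 3)%N by rewrite ltn_mod.
have H2 : ((R mu) %% 3 < 3)%N by rewrite ltn_mod.
rewrite carryE // -!F3nat Es Et /g.
ring.
Qed.

Lemma PolyDg (A : 'I_k -> nat) :
  Cub (fun mu : mu_t => Dg (\sum_i (mu i : nat) * A i)%N).
Proof.
apply: Poly_ext (PolyDg_card A (erefl #|[set: 'I_k]|)) _ => mu.
by apply: congr1; apply: eq_bigl => i; rewrite in_setT.
Qed.

End PolyDg.

Section Assembly.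
Variables (a b k : nat) (v : 'I_k -> amb a b).
Notation mu_t := {ffun 'I_k -> 'F_3}.

Definition sv (mu : mu_t) : amb a b := \sum_i v i *+ (mu i : nat).

Lemma fst_sum (F : 'I_k -> amb a b) : (\sum_i F i).1 = \sum_i (F i).1.
Proof. exact: (big_morph (fun x : amb a b => x.1) (fun x y => erefl) (erefl)). Qed.
Lemma snd_sum (F : 'I_k -> amb a b) : (\sum_i F i).2 = \sum_i (F i).2.
Proof. exact: (big_morph (fun x : amb a b => x.2) (fun x y => erefl) (erefl)). Qed.
Lemma fst_Mn (x : amb a b) m : (x *+ m).1 = x.1 *+ m.
Proof. by elim: m => [|m IH] //; rewrite !mulrS /= IH. Qed.
Lemma snd_Mn (x : amb a b) m : (x *+ m).2 = x.2 *+ m.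
Proof. by elim: m => [|m IH] //; rewrite !mulrS /= IH. Qed.

Lemma sv1 mu i1 : (sv mu).1 0 i1 = \sum_i mu i * (v i).1 0 i1.
Proof.
rewrite /sv fst_sum summxE; apply: eq_bigr => i _.
by rewrite fst_Mn mulmxnE -mulr_natl F3_val.
Qed.

Lemma sv2 mu l : ((sv mu).2 0 l : nat) = ((\sum_i (mu i : nat) * (v i).2 0%R l) %% 9)%N.
Proof.
rewrite /sv snd_sum summxE -Z9_nat_val natr_sum; congr val; apply: eq_bigr => i _.
by rewrite snd_Mn mulmxnE natrM natr_Zp mulr_natl.
Qed.

Lemma Cub_coord i : Cub (fun mu => Phi (sv mu) 0 i).
Proof.
apply: (@Poly_ext _ (fun mu => match split i with
   | inl i1 => (sv mu).1 0 i1
   | inr j => gray9 ((sv mu).2 0 (div3 j)) (j %% 3) end)); last first.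
  by move=> mu; rewrite mxE.
case: (split i) => [i1|j].
  apply: Poly_ext (PolyL1 (fun i => (v i).1 0 i1)) _ => mu.
  by rewrite sv1 /lin; apply: eq_bigr => *; rewrite mulrC.
set A := fun i0 => ((v i0).2 0%R (div3 j) : nat).
apply: Poly_ext (PolyD (PolyDg A) (PolyZ ((j %% 3)%:R) (PolyL1 (fun i => (A i)%:R)))) _.
move=> mu; rewrite gray9E sv2 Dg_mod9 F3_mod9 natr_sum /lin.
congr (_ + _ * _); apply: eq_bigr => i0 _.
by rewrite natrM F3_val mulrC.
Qed.

Lemma span_bound : exists L : seq 'rV['F_3]_(a + 3 * b),
  size L = (#|@predA k| + k * k)%N /\ forall mu, Phi (sv mu) \in <<L>>%VS.
Proof.
have [c Hc] := fin_all_exists Cub_coord.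
set vA := fun A => \row_i (c i).1 A.
set vB := fun p => \row_i (c i).2 p.
exists ([seq vA A | A <- enum (@predA k)] ++ [seq vB p | p <- enum {: 'I_k * 'I_k}]).
split.
  by rewrite size_cat !size_map -enumT -cardT -cardE card_prod card_ord.
move=> mu.
have -> : Phi (sv mu) = \sum_(A | @predA k A) mA A mu *: vA A + \sum_p mB p mu *: vB p.
  apply/rowP => i; rewrite Hc [RHS]mxE !summxE; congr (_ + _); apply: eq_bigr => *;
    by rewrite !mxE mulrC.
apply: memvD; apply: memv_suml => x Hx; apply: memvZ; apply: memv_span;
  rewrite mem_cat; apply/orP; [left|right]; apply: map_f; by rewrite mem_enum.
Qed.

End Assembly.

Local Close Scope ring_scope.

Lemma card_predA k : #|@predA k| = ('C(k, 1) + 'C(k, 2) + 'C(k, 3))%N.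
Proof.
have E (P : {pred {set 'I_k}}) : #|P| = (\sum_A (A \in P : nat))%N.
  rewrite -sum1_card big_mkcond /=; apply: eq_bigr => A _.
  by case: (A \in P).
have Ej j : 'C(k, j) = #|[set A : {set 'I_k} | #|A| == j]| by rewrite card_draws card_ord.
rewrite !Ej !E -!big_split /=; apply: eq_bigr => A _.
rewrite !inE unfold_in /predA; case: #|A| => [|[|[|[|n]]]] //.
Qed.

Lemma bin_ident n :
  ('C(n, 1) + 'C(n, 2) + 'C(n, 3) + n * n = n + 'C(n, 2) + 'C(n + 2, 3))%N.
Proof.
have H2 : (n * n = n + 2 * 'C(n, 2))%N.
  case: n => [|m] //; have := mul_bin_diag m.+1 1; rewrite bin1 /= => <-; lia.
rewrite !addn2 !binS bin1 H2; lia.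
Qed.

Theorem lemma16 (a b : nat) (C : {set amb a b}) (g d k : nat)
  (HC : is_Z3Z9_code C) (Ht : has_type C g d k) (rbar kbar : nat) :
  let CC := [set Phi x | x in C] in
  (rank_code CC = (g + 2 * d + rbar)%N ->
   ker_code CC = (g + 2 * d - kbar)%N ->
   (1 <= kbar <= d)%N ->
   (1 <= rbar <= 'C(kbar, 2) + 'C(kbar + 2, 3))%N) /\
  (rank_code CC = (g + 2 * d + rbar)%N ->
   ker_code CC = (g + 2 * d)%N ->
   rbar = 0%N).
Proof.
move=> CC.
set N := (g + 2 * d)%N.
have cardC : #|C| = (3 ^ N)%N.
  have [[f [_ [finj fim]]] _] := Ht.
  rewrite -fim card_imset // cardsT card_prod !card_mx (card_Fp (isT : prime 3)) card_ord.
  by rewrite /N expnD expnM expn1 mul1n [in RHS]expnM.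
have cardCC : #|CC| = (3 ^ N)%N by rewrite cardCC.
set K := kernel_code CC.
have cardK : #|K| = (3 ^ ker_code CC)%N by apply: addcl_card; apply: ker_addcl.
have KCC : {subset K <= CC} := KsubCC HC.
have rankE : rank_code CC = \dim <<enum CC>>%VS by [].
have CCspan : forall z, z \in <<enum CC>>%VS -> z \in CC -> True by [].
split.
- move=> Hr Hk /andP [k1 kd].
  apply/andP; split.
  + rewrite lt0n; apply/negP => /eqP r0.
    have T1 : #|[set z in <<enum CC>>%VS]| = #|CC|.
      rewrite cardsE.
      have H := card_vspace <<enum CC>>%VS.
      rewrite (card_Fp (isT : prime 3)) in H.
      by rewrite H cardCC -rankE Hr r0 addn0.
    have sub : CC \subset [set z in <<enum CC>>%VS].
      by apply/subsetP => z zC; rewrite inE memv_span // mem_enum.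
    have eqS := subset_cardP (esym T1) sub.
    have CCK : {subset CC <= K}.
      move=> x xC; apply/kerP => y yC.
      have : (y + x)%R \in [set z in <<enum CC>>%VS].
        by rewrite inE memvD // memv_span // mem_enum.
      by rewrite -eqS.
    have : #|K| = #|CC|.
      apply/eqP; rewrite eqn_leq subset_leq_card ?subset_leq_card //.
        by apply/subsetP.
      by apply/subsetP.
    rewrite cardK cardCC Hk => /expnI => /(_ isT).
    lia.
  + have [k' [v [vC cover cnt]]] := decomp HC.
    have k'le : (k' <= kbar)%N.
      move: cnt; rewrite (cardKC HC) cardK Hk cardC -expnD leq_exp2l //.
      rewrite /N in kd *; lia.
    have [L [sizeL HL]] := span_bound v.
    have sub : (<<enum CC>> <= <<enum K>> + <<L>>)%VS.
      apply/span_subvP => z; rewrite mem_enum => /imsetP [x xC ->].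
      have [mu Hmu] := cover x xC.
      have sC : sv v mu \in C by apply: Csum => // i _; apply: CMn.
      have -> : Phi x = (Phi (sv v mu + (x - sv v mu)) - Phi (sv v mu) + Phi (sv v mu))%R.
        by rewrite subrK [(sv v mu + _)%R]addrC subrK.
      apply: memv_add; last exact: HL.
      by apply: memv_span; rewrite mem_enum; apply: KC_shift.
    have h1 := dimvS sub.
    have h2 := (dimv_add_leqif <<enum K>>%VS <<L>>%VS).1.
    have h3 := dim_span L.
    have h4 := bin_ident kbar.
    have h5 := card_predA k'.
    have b1 := @leq_bin2l k' kbar 1 k'le.
    have b2 := @leq_bin2l k' kbar 2 k'le.
    have b3 := @leq_bin2l k' kbar 3 k'le.
    have b4 := leq_mul k'le k'le.
    rewrite -rankE Hr in h1.
    rewrite -/(ker_code CC) Hk in h2.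
    rewrite /N in kd h1 h2 *.
    move: (k' * k')%N (kbar * kbar)%N b4 h4 sizeL => p q b4 h4 sizeL.
    move: ('C(kbar,1)) ('C(kbar,2)) ('C(kbar,3)) ('C(kbar+2,3)) ('C(k',1)) ('C(k',2)) ('C(k',3)) b1 b2 b3 h4 h5 => c1 c2 c3 c4 e1 e2 e3 b1 b2 b3 h4 h5.
    have h12 : (g + 2 * d + rbar <= g + 2 * d - kbar + size L)%N.
      by apply: (leq_trans h1); apply: (leq_trans h2); rewrite leq_add2l.
    clear h1 h2 h3 HL sub.
    lia.
- move=> Hr Hk.
  have : #|K| = #|CC| by rewrite cardK Hk cardCC.
  move=> /subset_cardP E; have {E}E := E (introT subsetP KCC).
  have CCa : addcl CC.
    have [K0 KD] := ker_addcl CC.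
    by split; [rewrite -E | move=> x y; rewrite -!E; apply: KD].
  have := addcl_card CCa; rewrite cardCC -rankE Hr => /expnI => /(_ isT).
  lia.
Qed.
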